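(* Consider the $k$-prize collecting traveling salesman problem ($k$-PCTSP) on instances $(G,r,k,c,\pi)$ whose edge cost $c$ satisfies the triangle inequality. The algorithm $\mathcal{B}$ described below is a $4$-approximation algorithm for this problem: it returns a tour $T_{\mathrm{OUT}}$ containing $r$ and visiting at least $k$ vertices whose cost $\sum_{e\in E[T_{\mathrm{OUT}}]}c(e)+\sum_{v\notin V[T_{\mathrm{OUT}}]}\pi(v)$ is at most $4\,\mathrm{OPT}$, where $\mathrm{OPT}$ is the optimal value of the $k$-PCTSP instance.
   Context: A tour of a graph $G$ is a cyclic sequence of vertices $T=(u_1,\dots,u_m,u_1)$, with $E[T]=\{\{u_i,u_{i+1}\}: 1\le i\le m-1\}\cup\{\{u_m,u_1\}\}$ and $V[T]=\{u_1,\dots,u_m\}$. An instance of $k$-PCTSP consists of a complete graph $G=(V,E)$, a root $r\in V$, an integer $k>0$, a nonnegative edge cost $c:E\to\mathbb{R}_+$ and a nonnegative penalty $\pi:V\to\mathbb{R}_+$; a feasible solution is a tour $T$ with $r\in V[T]$ and $|V[T]|\ge k$, of cost $\sum_{e\in E[T]}c(e)+\sum_{v\in V\setminus V[T]}\pi(v)$, and $\mathrm{OPT}$ is the minimum cost. The rooted $k$-TSP instance $(G,r,k,c)$ asks for a tour containing $r$ with at least $k$ vertices minimizing $\sum_{e\in E[T]}c(e)$; the penalty TSP (PTSP) instance $(G,r,c,\pi)$ asks for a tour containing $r$ minimizing $\sum_{e\in E[T]}c(e)+\sum_{v\notin V[T]}\pi(v)$. Garg's algorithm is a 2-approximation algorithm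 for rooted $k$-TSP under the triangle inequality, and the Goemans–Williamson (GW) algorithm is a 2-approximation algorithm for PTSP under the triangle inequality. Algorithm $\mathcal{B}$: Step 1: apply Garg's algorithm to $(G,r,k,c)$, obtaining a tour $T_{\mathrm{Garg}}$. Step 2: apply the GW algorithm to $(G,r,c,\pi)$, obtaining a tour $T_{\mathrm{GW}}$. Step 3: merge $T_{\mathrm{Garg}}$ and $T_{\mathrm{GW}}$ (both pass through $r$) into a single closed walk and return the tour $T_{\mathrm{OUT}}$ obtained from it by shortcutting repeated vertices. *)

(* Defs.v *)
From HB Require Import structures.
From mathcomp Require Import all_boot all_order all_algebra.
Set Implicit Arguments. Unset Strict Implicit. Unset Printing Implicit Defensive.
Import Order.TTheory GRing.Theory Num.Theory.
Local Open Scope ring_scope.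

(* A tour T = (u_1,...,u_m,u_1) is represented by the sequence [:: u_1; ...; u_m]
   (cyclic).  V[T] is the set of items of T. *)

Section Tours.
Variables (R : realFieldType) (V : finType).

(* edge cost of the tour: sum of c over the cyclic consecutive pairs
   (u_1,u_2), ..., (u_{m-1},u_m), (u_m,u_1) *)
Definition tour_edge_cost (c : V -> V -> R) (T : seq V) : R :=
  match T with
  | [::] => 0
  | x :: s => \sum_(p <- zip (x :: s) (rcons s x)) c p.1 p.2
  end.

Definition tour_penalty (pi : V -> R) (T : seq V) : R :=
  \sum_(v | v \notin T) pi v.

Definition nverts (T : seq V) : nat := #|[pred v | v \in T]|.

Definition kpctsp_feasible (r : V) (k : nat) (T : seq V) : Prop :=
  r \in T /\ (k <= nverts T)%N.
Definition kpctsp_cost (c : V -> V -> R) (pi : V -> R) (T : seq V) : R :=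
  tour_edge_cost c T + tour_penalty pi T.

Definition ktsp_feasible (r : V) (k : nat) (T : seq V) : Prop :=
  r \in T /\ (k <= nverts T)%N.
Definition ktsp_cost (c : V -> V -> R) (T : seq V) : R := tour_edge_cost c T.

Definition ptsp_feasible (r : V) (T : seq V) : Prop := r \in T.
Definition ptsp_cost (c : V -> V -> R) (pi : V -> R) (T : seq V) : R :=
  tour_edge_cost c T + tour_penalty pi T.

(* Step 3: both tours pass through r; rotate each to start at r and
   concatenate: the closed walk r ~T1~> r ~T2~> r. *)
Definition merge_at (r : V) (T1 T2 : seq V) : seq V :=
  rot (index r T1) T1 ++ rot (index r T2) T2.

(* T is obtained from the closed walk W by shortcutting repeated vertices:
   it keeps exactly one occurrence of each vertex of W, in walk order. *)
Definition is_shortcut (T W : seq V) : Prop :=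
  [/\ subseq T W, uniq T & {subset W <= T}].

End Tours.

(* Main.v *)
Require Import Defs.
From HB Require Import structures.
From mathcomp Require Import all_boot all_order all_algebra.
From mathcomp Require Import lra.
Import Order.TTheory GRing.Theory Num.Theory.
Local Open Scope ring_scope.
Set Implicit Arguments. Unset Strict Implicit.

Fixpoint pc (R : realFieldType) (V : finType) (c : V -> V -> R) (x : V) (s : seq V) : R :=
  match s with [::] => 0 | y :: s' => c x y + pc c y s' end.

Definition cyc (R : realFieldType) (V : finType) (c : V -> V -> R) (s : seq V) : R :=
  match s with [::] => 0 | x :: s' => pc c x (rcons s' x) end.

Lemma pc_cat (R : realFieldType) (V : finType) (c : V -> V -> R) x s t :
  pc c x (s ++ t) = pc c x s + pc c (last x s) t.
Proof. elim: s x => [|y s IH] x /=; first by rewrite add0r. by rewrite IH addrA. Qed.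

Lemma pc_rcons (R : realFieldType) (V : finType) (c : V -> V -> R) x s y :
  pc c x (rcons s y) = pc c x s + c (last x s) y.
Proof. by rewrite -cats1 pc_cat /= addr0. Qed.

Lemma tec_cyc (R : realFieldType) (V : finType) (c : V -> V -> R) s :
  tour_edge_cost c s = cyc c s.
Proof.
case: s => [//|x s] /=.
move: {2 4}x => y.
elim: s x => [|z s IH] x /=; first by rewrite big_cons big_nil.
by rewrite big_cons IH.
Qed.

Lemma cyc_catC (R : realFieldType) (V : finType) (c : V -> V -> R) u v :
  cyc c (u ++ v) = cyc c (v ++ u).
Proof.
case: u => [|a u]; first by rewrite cats0.
case: v => [|b v]; first by rewrite cats0.
rewrite /= !rcons_cat !pc_cat /= !pc_rcons.
lra.
Qed.

Lemma cyc_rot (R : realFieldType) (V : finType) (c : V -> V -> R) n s :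
  cyc c (rot n s) = cyc c s.
Proof. by rewrite /rot cyc_catC cat_take_drop. Qed.

Lemma cyc_cat_r (R : realFieldType) (V : finType) (c : V -> V -> R) r u v :
  cyc c ((r :: u) ++ (r :: v)) = cyc c (r :: u) + cyc c (r :: v).
Proof.
rewrite /= rcons_cat pc_cat /= !pc_rcons. lra.
Qed.

Lemma pc_subseq (R : realFieldType) (V : finType) (c : V -> V -> R)
  (c_tri : forall u v w, c u w <= c u v + c v w) t :
  forall s x y, subseq s t -> pc c x (rcons s y) <= pc c x (rcons t y).
Proof.
elim: t => [|z t IH] s x y.
  by rewrite subseq0 => /eqP ->.
have side : forall s', subseq s' t ->
   pc c x (rcons s' y) <= pc c x (rcons (z :: t) y).
  move=> s' hs; apply: le_trans (IH _ x y hs) _.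
  rewrite rcons_cons /=.
  case: t {IH hs} => [|u t] /=.
    by rewrite !addr0.
  have := c_tri x z u; lra.
case: s => [|a s].
  by move=> _; apply: side; rewrite sub0seq.
rewrite [subseq _ _]/=.
case: eqP => [-> hs|_ hs].
  rewrite /= lerD2l; exact: IH.
exact: side.
Qed.

Lemma subseq_split (V : finType) (a : V) s w :
  subseq (a :: s) w -> exists w1 w2, w = w1 ++ a :: w2 /\ subseq s w2.
Proof.
elim: w => [//|b w IH] /=.
case: eqP => [<- hs|_ hs]; first by exists [::], w.
have [w1 [w2 [-> h]]] := IH hs.
by exists (b :: w1), w2.
Qed.

Lemma pc_ge0 (R : realFieldType) (V : finType) (c : V -> V -> R)
  (c_ge0 : forall u v, 0 <= c u v) x s : 0 <= pc c x s.
Proof. elim: s x => [|y s IH] x /=; first by []. by rewrite addr_ge0. Qed.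

Lemma cyc_subseq (R : realFieldType) (V : finType) (c : V -> V -> R)
  (c_ge0 : forall u v, 0 <= c u v)
  (c_tri : forall u v w, c u w <= c u v + c v w) s w :
  subseq s w -> cyc c s <= cyc c w.
Proof.
case: s => [|a s] hs.
  case: w hs => [|b w] _ //=; exact: pc_ge0.
have [w1 [w2 [-> h]]] := subseq_split hs.
rewrite cyc_catC /=.
apply: pc_subseq => //.
exact: subseq_trans h (prefix_subseq _ _).
Qed.

Lemma rot_index_head (V : finType) (r : V) T :
  r \in T -> exists u, rot (index r T) T = r :: u.
Proof.
move=> hr; rewrite /rot (drop_nth r); last by rewrite index_mem.
by rewrite nth_index //; eexists.
Qed.

Unset Implicit Arguments.
Theorem theorem3 (R : realFieldType) (V : finType) (r : V) (k : nat)
    (c : V -> V -> R) (pi : V -> R)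
    (c_sym : forall u v, c u v = c v u)
    (c_ge0 : forall u v, 0 <= c u v)
    (c_refl : forall v, c v v = 0)
    (c_tri : forall u v w, c u w <= c u v + c v w)
    (pi_ge0 : forall v, 0 <= pi v)
    (TGarg TGW TOUT : seq V)
    (* Step 1: output of Garg's 2-approximation for rooted k-TSP *)
    (HGarg_feas : ktsp_feasible r k TGarg)
    (HGarg_apx : forall T, ktsp_feasible r k T ->
                   ktsp_cost c TGarg <= 2 * ktsp_cost c T)
    (* Step 2: output of the GW 2-approximation for PTSP *)
    (HGW_feas : ptsp_feasible r TGW)
    (HGW_apx : forall T, ptsp_feasible r T ->
                 ptsp_cost c pi TGW <= 2 * ptsp_cost c pi T)
    (* Step 3: merge and shortcut *)
    (HOUT : is_shortcut TOUT (merge_at r TGarg TGW)) :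
  kpctsp_feasible r k TOUT /\
  (forall T, kpctsp_feasible r k T ->
     kpctsp_cost c pi TOUT <= 4 * kpctsp_cost c pi T).
Proof.
case: HOUT => hsub huniq hW.
case: (HGarg_feas) => hrG hkG.
have subG : {subset TGarg <= TOUT}.
  by move=> x hx; apply: hW; rewrite /merge_at mem_cat mem_rot hx.
have subW : {subset TGW <= TOUT}.
  by move=> x hx; apply: hW; rewrite /merge_at mem_cat !mem_rot hx orbT.
split.
  split; first exact: subG.
  apply: leq_trans hkG _; rewrite /nverts.
  by apply: subset_leq_card; apply/subsetP => x; rewrite !inE; apply: subG.
move=> T hT.
have hE : tour_edge_cost c TOUT <= tour_edge_cost c TGarg + tour_edge_cost c TGW.
  rewrite !tec_cyc.
  apply: le_trans (cyc_subseq c_ge0 c_tri hsub) _.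
  rewrite /merge_at.
  have [u hu] := rot_index_head hrG.
  have [v hv] := rot_index_head HGW_feas.
  rewrite -(cyc_rot c (index r TGarg) TGarg) -(cyc_rot c (index r TGW) TGW).
  by rewrite hu hv cyc_cat_r.
have hP : tour_penalty pi TOUT <= tour_penalty pi TGW.
  rewrite /tour_penalty (big_mkcond (fun v => v \notin TOUT)).
  rewrite (big_mkcond (fun v => v \notin TGW)).
  apply: ler_sum => v _.
  case: (boolP (v \in TGW)) => hv /=.
    by rewrite (subW _ hv) /=.
  by case: (v \notin TOUT).
have hPT : 0 <= tour_penalty pi T by apply: sumr_ge0 => v _.
have h1 := HGarg_apx T hT.
have h2 := HGW_apx T (proj1 hT).
move: h1 h2 hE hP hPT.
rewrite /kpctsp_cost /ktsp_cost /ptsp_cost.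
lra.
Qed.
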